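(* Let $C$ be an $E$-linear code of length $2n$. Then: (1) if $C$ is free, $LSHull(C^{\perp_{S_L}})=LSHull(C)$; (2) if $C_{Res}\cap (C_{Tor})^{\perp_S}=\{0\}$ and $C_{Tor}=\mathbb{F}_2^{2n}$, then $RSHull(C^{\perp_{S_R}})=RSHull(C)$; (3) $SHull(C^{\perp_S})=SHull(C)$.
   Context: $E=\langle \kappa,\tau \mid 2\kappa=2\tau=0,\ \kappa^2=\kappa,\ \tau^2=\tau,\ \kappa\tau=\kappa,\ \tau\kappa=\tau\rangle$ is the non-unital ring $\{0,\kappa,\tau,\zeta\}$, $\zeta=\kappa+\tau$, with $e\kappa=e\tau=e$, $e\zeta=0$ for all $e\in E$. Every $e\in E$ is uniquely $u\kappa+v\zeta$ ($u,v\in\mathbb{F}_2$); $\pi(u\kappa+v\zeta)=u$, componentwise. An $E$-linear code of length $2n$ is a left $E$-submodule $C\subseteq E^{2n}$; $C_{Res}=\pi(C)$, $C_{Tor}=\{v\in\mathbb{F}_2^{2n}:\zeta v\in C\}$ (componentwise, $0\cdot\zeta=0,1\cdot\zeta=\zeta$); $C$ is free if $C_{Res}=C_{Tor}$. Symplectic inner product (over $E$ or $\mathbb{F}_2$): $\langle (u|v),(u'|v')\rangle_s=\sum_i u_iv'_i+\sum_i v_iu'_i$; for binary $B$, $B^{\perp_S}=\{z:\langle z,w\rangle_s=0\ \forall w\in B\}$. For $E$-linear $C$: $C^{\perp_{S_L}}=\{z\in E^{2n}:\langle z,w\rangle_s=0\ \forall w\in C\}$, $C^{\perp_{S_R}}=\{z\in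 E^{2n}:\langle w,z\rangle_s=0\ \forall w\in C\}$, $C^{\perp_S}=C^{\perp_{S_L}}\cap C^{\perp_{S_R}}$, $LSHull(C)=C\cap C^{\perp_{S_L}}$, $RSHull(C)=C\cap C^{\perp_{S_R}}$, $SHull(C)=C\cap C^{\perp_S}$. *)

(* Defs.v *)
From HB Require Import structures.
From mathcomp Require Import all_boot.
Set Implicit Arguments. Unset Strict Implicit. Unset Printing Implicit Defensive.

(* The non-unital ring E = {0, kappa, tau, zeta}, zeta = kappa + tau. *)
Inductive E := E0 | Ek | Et | Ez.

Definition E_to_ord (e : E) : 'I_4 :=
  match e with E0 => inord 0 | Ek => inord 1 | Et => inord 2 | Ez => inord 3 end.
Definition ord_to_E (i : 'I_4) : E :=
  match val i with 0 => E0 | 1 => Ek | 2 => Et | _ => Ez end.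
Lemma E_to_ordK : cancel E_to_ord ord_to_E.
Proof. by case; rewrite /ord_to_E /= inordK. Qed.
HB.instance Definition _ := Finite.copy E (can_type E_to_ordK).

Definition Eadd (a b : E) : E :=
  match a, b with
  | E0, x | x, E0 => x
  | Ek, Ek | Et, Et | Ez, Ez => E0
  | Ek, Et | Et, Ek => Ez
  | Ek, Ez | Ez, Ek => Et
  | Et, Ez | Ez, Et => Ek
  end.

(* multiplication: kappa^2 = kappa, tau^2 = tau, kappa tau = kappa,
   tau kappa = tau; hence e kappa = e tau = e and e zeta = 0. *)
Definition Emul (a b : E) : E :=
  match b with
  | E0 | Ez => E0
  | Ek | Et => a
  end.

(* pi (u kappa + v zeta) = u *)
Definition Epi (e : E) : bool :=
  match e with E0 | Ez => false | Ek | Et => true end.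

(* words of length 2n over E and over F_2 (= bool); coordinates
   lshift n i are the "u" part, rshift n i the "v" part. *)
Definition word (n : nat) := {ffun 'I_(n + n) -> E}.
Definition bword (n : nat) := {ffun 'I_(n + n) -> bool}.

Definition word0 n : word n := [ffun => E0].
Definition bword0 n : bword n := [ffun => false].
Definition wadd n (x y : word n) : word n := [ffun i => Eadd (x i) (y i)].
Definition wscale n (e : E) (x : word n) : word n := [ffun i => Emul e (x i)].

Definition Elinear n (C : {set word n}) : Prop :=
  [/\ word0 n \in C,
      (forall x y, x \in C -> y \in C -> wadd x y \in C) &
      (forall e x, x \in C -> wscale e x \in C)].

Definition CRes n (C : {set word n}) : {set bword n} :=
  [set [ffun i => Epi (x i)] | x : word n in C].
Definition zeta_of n (v : bword n) : word n :=
  [ffun i => if v i then Ez else E0].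
Definition CTor n (C : {set word n}) : {set bword n} :=
  [set v | zeta_of v \in C].
Definition free n (C : {set word n}) : Prop := CRes C = CTor C.

Definition sip n (x y : word n) : E :=
  Eadd (\big[Eadd/E0]_(i < n) Emul (x (lshift n i)) (y (rshift n i)))
       (\big[Eadd/E0]_(i < n) Emul (x (rshift n i)) (y (lshift n i))).
Definition bsip n (x y : bword n) : bool :=
  addb (\big[addb/false]_(i < n) (x (lshift n i) && y (rshift n i)))
       (\big[addb/false]_(i < n) (x (rshift n i) && y (lshift n i))).

Definition bperpS n (B : {set bword n}) : {set bword n} :=
  [set z | [forall w in B, ~~ bsip z w]].

Definition perpSL n (C : {set word n}) : {set word n} :=
  [set z | [forall w in C, sip z w == E0]].
Definition perpSR n (C : {set word n}) : {set word n} :=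
  [set z | [forall w in C, sip w z == E0]].
Definition perpS n (C : {set word n}) : {set word n} :=
  perpSL C :&: perpSR C.

Definition LSHull n (C : {set word n}) := C :&: perpSL C.
Definition RSHull n (C : {set word n}) := C :&: perpSR C.
Definition SHull n (C : {set word n}) := C :&: perpS C.

(* Main.v *)
From Pilot Require Import Defs.
From HB Require Import structures.
From mathcomp Require Import all_boot.
From mathcomp Require Import all_order all_algebra.
Set Implicit Arguments. Unset Strict Implicit. Unset Printing Implicit Defensive.
Import GRing.Theory.
Section Bin.
Variable n : nat.
Implicit Types (B : {set bword n}) (x y z b : bword n).

Definition bxor (x y : bword n) : bword n := [ffun i => x i (+) y i].
Definition closedB (B : {set bword n}) :=
  bword0 n \in B /\ forall x y, x \in B -> y \in B -> bxor x y \in B.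

Definition dot (x y : bword n) : bool := \big[addb/false]_(i < n + n) (x i && y i).
Definition dotperp (B : {set bword n}) : {set bword n} :=
  [set z | [forall b in B, ~~ dot z b]].

Lemma dotC x y : dot x y = dot y x.
Proof. by apply: eq_bigr => i _; rewrite andbC. Qed.

Lemma dot_xorl x y b : dot (bxor x y) b = dot x b (+) dot y b.
Proof.
rewrite /dot -big_split /=; apply: eq_bigr => i _; rewrite ffunE.
by case: (x i); case: (y i); case: (b i).
Qed.

Lemma dot0l b : dot (bword0 n) b = false.
Proof. by rewrite /dot big1 // => i _; rewrite ffunE. Qed.

Lemma dotperp_closed B : closedB (dotperp B).
Proof.
split; first by rewrite inE; apply/forall_inP => b _; rewrite dot0l.
move=> x y; rewrite !inE => /forall_inP hx /forall_inP hy.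
by apply/forall_inP => b hb; rewrite dot_xorl (negbTE (hx b hb)) (negbTE (hy b hb)).
Qed.

Lemma sub_dotperp2 B : B \subset dotperp (dotperp B).
Proof.
apply/subsetP => b hb; rewrite inE; apply/forall_inP => z; rewrite inE.
by move/forall_inP => /(_ b hb); rewrite dotC.
Qed.

Local Open Scope ring_scope.

Lemma F2_cases (a : 'F_2) : a = 0 \/ a = 1.
Proof. case: a => [[|[|k]] Hk] //; [left|right]; exact: val_inj. Qed.

Definition tomx (x : bword n) : 'rV['F_2]_(n + n) := \row_i (nat_of_bool (x i))%:R.
Definition frommx (v : 'rV['F_2]_(n + n)) : bword n := [ffun i => v 0 i != 0].

Lemma frommxK v : tomx (frommx v) = v.
Proof.
apply/rowP => i; rewrite !mxE ffunE.
by case: (F2_cases (v 0 i)) => ->.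
Qed.

Lemma tomxK x : frommx (tomx x) = x.
Proof. by apply/ffunP => i; rewrite ffunE mxE; case: (x i). Qed.

Lemma tomx_xor x y : tomx (bxor x y) = tomx x + tomx y.
Proof.
apply/rowP => i; rewrite !mxE ffunE.
by case: (x i); case: (y i) => //=; apply/val_inj.
Qed.

Lemma tomx0 : tomx (bword0 n) = 0.
Proof. by apply/rowP => i; rewrite !mxE ffunE. Qed.

Lemma nat_addb (a b : bool) : ((nat_of_bool (a (+) b))%:R : 'F_2) = (nat_of_bool a)%:R + (nat_of_bool b)%:R.
Proof. by case: a; case: b => //=; apply/val_inj. Qed.

Lemma dot_mx x y : (tomx x *m (tomx y)^T) 0 0 = (nat_of_bool (dot x y))%:R.
Proof.
rewrite mxE /dot.
rewrite (big_morph (fun b : bool => ((nat_of_bool b)%:R : 'F_2)) nat_addb (erefl _)).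
by apply: eq_bigr => i _; rewrite !mxE; case: (x i); case: (y i); rewrite /= ?mul1r ?mul0r.
Qed.

Lemma mx11_eq0 (M : 'M['F_2]_1) : (M == 0) = (M 0 0 == 0).
Proof.
apply/eqP/eqP => [->|h]; first by rewrite mxE.
by apply/matrixP => i j; rewrite !ord1 h mxE.
Qed.

Lemma dot_eq0 x y : (tomx x *m (tomx y)^T == 0) = ~~ dot x y.
Proof. by rewrite mx11_eq0 dot_mx; case: (dot x y). Qed.

Definition W (B : {set bword n}) : 'M['F_2]_(n + n) := (\sum_(b in B) <<tomx b>>)%MS.

Lemma W_sup B b : b \in B -> (tomx b <= W B)%MS.
Proof. by move=> hb; apply: (sumsmx_sup b) => //; rewrite genmxE. Qed.

Lemma W_sub B v : closedB B -> (v <= W B)%MS -> frommx v \in B.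
Proof.
move=> [h0 hD] /sub_sumsmxP [u ->].
suff [b hb ->] : exists2 b, b \in B & \sum_(i in B) u i *m <<tomx i>>%MS = tomx b by rewrite tomxK.
apply: (big_ind (fun v => exists2 b, b \in B & v = tomx b)).
- by exists (bword0 n); rewrite ?tomx0.
- by move=> _ _ [a ha ->] [b hb ->]; exists (bxor a b); rewrite ?tomx_xor //; apply: hD.
- move=> b hb; have : (u b *m <<tomx b>> <= tomx b)%MS by rewrite -(genmxE (tomx b)) submxMl.
  case/submxP => w ->; rewrite (mx11_scalar w) mul_scalar_mx.
  case: (F2_cases (w 0 0)) => ->; last by exists b; rewrite ?scale1r.
  by exists (bword0 n); rewrite ?scale0r ?tomx0.
Qed.

Lemma dotperp_mx B z : (z \in dotperp B) = (tomx z <= kermx (W B)^T)%MS.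
Proof.
rewrite sub_kermx -trmx_eq0 trmx_mul trmxK -sub_kermx inE.
apply/forall_inP/sumsmx_subP => h b hb.
  by rewrite genmxE sub_kermx dot_eq0 dotC h.
by move: (h b hb); rewrite genmxE sub_kermx dot_eq0 dotC.
Qed.

Lemma rank_dotperp B : \rank (W (dotperp B)) = (n + n - \rank (W B))%N.
Proof.
rewrite -(mxrank_tr (W B)) -mxrank_ker; apply/eqP; rewrite eqn_leq.
apply/andP; split; apply: mxrankS.
  by apply/sumsmx_subP => b; rewrite genmxE -dotperp_mx.
apply/row_subP => i; rewrite -(frommxK (row i _)); apply: W_sup.
by rewrite dotperp_mx frommxK row_sub.
Qed.

Lemma dotperp2 B : closedB B -> dotperp (dotperp B) = B.
Proof.
move=> cB; have sB := sub_dotperp2 B.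
have sW : (W B <= W (dotperp (dotperp B)))%MS.
  by apply/sumsmx_subP => b hb; rewrite genmxE; apply: W_sup; apply: (subsetP sB).
have := mxrank_leqif_sup sW.
rewrite !rank_dotperp subKn ?rank_leq_col // => /leqif_refl => sW'.
apply/eqP; rewrite eqEsubset sB andbT; apply/subsetP => x hx.
rewrite -(tomxK x); apply: W_sub => //; apply: submx_trans (W_sup hx) _.
exact: sW'.
Qed.
End Bin.
Section Sym.
Variable n : nat.
Implicit Types (A B : {set bword n}) (x y z u w : bword n).

Definition swapi (i : 'I_(n + n)) : 'I_(n + n) :=
  match split i with inl j => rshift n j | inr j => lshift n j end.

Lemma swapi_l j : swapi (lshift n j) = rshift n j.
Proof. by rewrite /swapi (unsplitK (inl _ : 'I_n + 'I_n)). Qed.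
Lemma swapi_r j : swapi (rshift n j) = lshift n j.
Proof. by rewrite /swapi (unsplitK (inr _ : 'I_n + 'I_n)). Qed.
Lemma swapiK : involutive swapi.
Proof. by move=> i; rewrite -(splitK i); case: (split i) => j /=; rewrite ?swapi_l ?swapi_r ?swapi_l. Qed.

Definition swp x : bword n := [ffun i => x (swapi i)].
Lemma swpK : involutive swp.
Proof. by move=> x; apply/ffunP => i; rewrite !ffunE swapiK. Qed.

Lemma bsip_dot x y : bsip x y = dot x (swp y).
Proof.
rewrite /dot big_split_ord /=; congr addb; apply: eq_bigr => i _;
by rewrite ffunE ?swapi_l ?swapi_r.
Qed.

Lemma dot_swp x y : dot (swp x) y = dot x (swp y).
Proof.
rewrite /dot (reindex_inj (inv_inj swapiK)); apply: eq_bigr => i _.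
by rewrite !ffunE swapiK.
Qed.

Lemma bsipC x y : bsip x y = bsip y x.
Proof.
rewrite /bsip addbC; congr addb; apply: eq_bigr => i _; by rewrite andbC.
Qed.

Lemma bsip_xorl x y w : bsip (bxor x y) w = bsip x w (+) bsip y w.
Proof. by rewrite !bsip_dot dot_xorl. Qed.

Lemma bperpS_dot B z : (z \in bperpS B) = (swp z \in dotperp B).
Proof.
rewrite !inE; apply/forall_inP/forall_inP => h w hw; move: (h w hw);
by rewrite bsip_dot dot_swp.
Qed.

Lemma bperpS2 B : bperpS (bperpS B) = dotperp (dotperp B).
Proof.
apply/setP => z; rewrite !inE; apply/forall_inP/forall_inP => h u hu.
  have : swp u \in bperpS B by rewrite bperpS_dot swpK.
  by move/h; rewrite bsip_dot swpK.
by rewrite bsip_dot; apply: h; rewrite -bperpS_dot.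
Qed.

Lemma bperpS2_closed B : closedB B -> bperpS (bperpS B) = B.
Proof. by move=> cB; rewrite bperpS2 dotperp2. Qed.

Lemma bperpS_closed B : closedB (bperpS B).
Proof.
split.
  rewrite inE; apply/forall_inP => w _; rewrite bsip_dot dot0l //.
move=> x y; rewrite !inE => /forall_inP hx /forall_inP hy.
by apply/forall_inP => b hb; rewrite bsip_xorl (negbTE (hx b hb)) (negbTE (hy b hb)).
Qed.

Lemma bperpS0 B : bword0 n \in bperpS B.
Proof. by case: (bperpS_closed B). Qed.

Lemma bperpS_anti A B : A \subset B -> bperpS B \subset bperpS A.
Proof.
move=> /subsetP sAB; apply/subsetP => z; rewrite !inE => /forall_inP h.
by apply/forall_inP => w /sAB /h.
Qed.

Lemma bperpST : bperpS [set: bword n] = [set bword0 n].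
Proof.
apply/setP => z; rewrite in_set1; apply/idP/eqP => [hz|->]; last exact: bperpS0.
apply/ffunP => i; rewrite ffunE.
have : swp z \in dotperp [set: bword n] by rewrite -bperpS_dot.
rewrite inE => /forall_inP /(_ [ffun j => j == swapi i]) /(_ (in_setT _)).
rewrite /dot (bigD1 (swapi i)) //= big1 => [|j hj]; last first.
  by rewrite !ffunE (negbTE hj) andbF.
rewrite !ffunE swapiK; case: eqP => // _; rewrite andbT addbF => /negbTE h; exact: h.
Qed.

End Sym.
Definition Enu (e : E) : bool := match e with Et | Ez => true | _ => false end.

Lemma Epi_add a b : Epi (Eadd a b) = Epi a (+) Epi b. Proof. by case: a; case: b. Qed.
Lemma Enu_add a b : Enu (Eadd a b) = Enu a (+) Enu b. Proof. by case: a; case: b. Qed.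
Lemma Epi_mul a b : Epi (Emul a b) = Epi a && Epi b. Proof. by case: a; case: b. Qed.
Lemma Enu_mul a b : Enu (Emul a b) = Enu a && Epi b. Proof. by case: a; case: b. Qed.
Lemma E_eq0 e : (e == E0) = ~~ Epi e && ~~ Enu e.
Proof. by case: e; [rewrite eqxx | apply/eqP.. ]. Qed.

Section W.
Variable n : nat.
Implicit Types (A B X Y : {set bword n}) (x y u v : bword n) (z w : word n) (C : {set word n}).

Definition Pw z : bword n := [ffun i => Epi (z i)].
Definition Nw z : bword n := [ffun i => Enu (z i)].

Lemma sip_pi z w : Epi (sip z w) = bsip (Pw z) (Pw w).
Proof.
rewrite /sip /bsip Epi_add !(big_morph Epi Epi_add (erefl : Epi E0 = false)).
by congr addb; apply: eq_bigr => i _; rewrite Epi_mul !ffunE.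
Qed.

Lemma sip_nu z w : Enu (sip z w) = bsip (Nw z) (Pw w).
Proof.
rewrite /sip /bsip Enu_add !(big_morph Enu Enu_add (erefl : Enu E0 = false)).
by congr addb; apply: eq_bigr => i _; rewrite Enu_mul !ffunE.
Qed.

Lemma sip_eq0 z w : (sip z w == E0) = ~~ bsip (Pw z) (Pw w) && ~~ bsip (Nw z) (Pw w).
Proof. by rewrite E_eq0 sip_pi sip_nu. Qed.

Definition mk u v : word n :=
  [ffun i => if u i then (if v i then Et else Ek) else (if v i then Ez else E0)].
Lemma Pmk u v : Pw (mk u v) = u.
Proof. by apply/ffunP => i; rewrite !ffunE; case: (u i); case: (v i). Qed.
Lemma Nmk u v : Nw (mk u v) = v.
Proof. by apply/ffunP => i; rewrite !ffunE; case: (u i); case: (v i). Qed.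

Definition box X Y : {set word n} := [set z | (Pw z \in X) && (Nw z \in Y)].

Lemma in_box X Y z : (z \in box X Y) = (Pw z \in X) && (Nw z \in Y).
Proof. by rewrite inE. Qed.

Lemma box_setI X Y X' Y' : box X Y :&: box X' Y' = box (X :&: X') (Y :&: Y').
Proof.
apply/setP => z; rewrite !in_setI !in_box !in_setI.
by case: (Pw z \in X); case: (Pw z \in X'); case: (Nw z \in Y); case: (Nw z \in Y').
Qed.

Lemma perpSL_box X Y : bword0 n \in Y -> perpSL (box X Y) = box (bperpS X) (bperpS X).
Proof.
move=> Y0; apply/setP => z; rewrite in_box !inE.
apply/forall_inP/andP => [h|[/forall_inP h1 /forall_inP h2] w].
  split; apply/forall_inP => x hx;
  (have /h : mk x (bword0 n) \in box X Y by rewrite in_box Pmk Nmk hx Y0);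
  by rewrite sip_eq0 Pmk => /andP[].
by rewrite in_box sip_eq0 => /andP[hw _]; rewrite h1 ?h2.
Qed.

Lemma perpSR_box X Y : bword0 n \in X -> bword0 n \in Y ->
  perpSR (box X Y) = box (bperpS X :&: bperpS Y) [set: bword n].
Proof.
move=> X0 Y0; apply/setP => z; rewrite in_box in_setT andbT in_setI !inE.
apply/forall_inP/andP => [h|[/forall_inP h1 /forall_inP h2] w].
  split; apply/forall_inP => x hx.
    have /h : mk x (bword0 n) \in box X Y by rewrite in_box Pmk Nmk hx Y0.
    by rewrite sip_eq0 Pmk bsipC => /andP[].
  have /h : mk (bword0 n) x \in box X Y by rewrite in_box Pmk Nmk hx X0.
  by rewrite sip_eq0 Nmk => /andP[_]; rewrite bsipC.
by rewrite in_box sip_eq0 => /andP[hw hw']; rewrite bsipC h1 // bsipC h2.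
Qed.

Lemma perpS_box R T : closedB R -> closedB T -> R \subset T ->
  perpS (box R T) = box (bperpS T) (bperpS R).
Proof.
move=> [R0 _] [T0 _] RT.
rewrite /perpS perpSL_box // perpSR_box // box_setI setIT.
congr box; apply/setP => x; rewrite !in_setI.
by case hT: (x \in bperpS T); rewrite ?andbF // (subsetP (bperpS_anti RT) _ hT).
Qed.

Lemma part1 R : closedB R -> LSHull (perpSL (box R R)) = LSHull (box R R).
Proof.
move=> cR; have [R0 _] := cR.
rewrite /LSHull perpSL_box // perpSL_box ?bperpS0 // bperpS2_closed //.
by rewrite setIC.
Qed.

Lemma part2 R : closedB R ->
  RSHull (perpSR (box R [set: bword n])) = RSHull (box R [set: bword n]).
Proof.
move=> [R0 _]; rewrite /RSHull perpSR_box ?in_setT // bperpST.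
have -> : bperpS R :&: [set bword0 n] = [set bword0 n].
  by apply/setIidPr; rewrite sub1set bperpS0.
rewrite perpSR_box ?in_setT ?set11 // bperpST.
have -> : bperpS [set bword0 n] :&: [set bword0 n] = [set bword0 n].
  by apply/setIidPr; rewrite sub1set bperpS0.
rewrite setIid box_setI.
have -> : R :&: [set bword0 n] = [set bword0 n] by apply/setIidPr; rewrite sub1set.
by rewrite setIid.
Qed.

Lemma part3 R T : closedB R -> closedB T -> R \subset T ->
  SHull (perpS (box R T)) = SHull (box R T).
Proof.
move=> cR cT RT.
rewrite /SHull perpS_box // perpS_box ?bperpS_closed ?bperpS_anti //.
rewrite !bperpS2_closed //; try exact: bperpS_closed.
- by rewrite setIC.
- exact: bperpS_closed.
- exact: bperpS_closed.
Qed.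

End W.
Section L.
Variable n : nat.
Implicit Types (z w : word n) (C : {set word n}).

Lemma CResP C u : reflect (exists2 w, w \in C & u = Pw w) (u \in CRes C).
Proof. exact: imsetP. Qed.

Lemma linear_closedR C : Elinear C -> closedB (CRes C).
Proof.
move=> [h0 hD hS]; split.
  apply/CResP; exists (word0 n) => //; by apply/ffunP => i; rewrite !ffunE.
move=> x y /CResP[a ha ->] /CResP[b hb ->]; apply/CResP; exists (wadd a b); first exact: hD.
by apply/ffunP => i; rewrite !ffunE Epi_add.
Qed.

Lemma linear_closedT C : Elinear C -> closedB (CTor C).
Proof.
move=> [h0 hD hS]; split.
  rewrite inE; suff -> : zeta_of (bword0 n) = word0 n by [].
  by apply/ffunP => i; rewrite !ffunE.
move=> x y; rewrite !inE => hx hy.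
suff -> : zeta_of (bxor x y) = wadd (zeta_of x) (zeta_of y) by apply: hD.
by apply/ffunP => i; rewrite !ffunE; case: (x i); case: (y i).
Qed.

Lemma linear_RT C : Elinear C -> CRes C \subset CTor C.
Proof.
move=> [h0 hD hS]; apply/subsetP => x /CResP[w hw ->]; rewrite inE.
suff -> : zeta_of (Pw w) = wscale Ez w by apply: hS.
by apply/ffunP => i; rewrite !ffunE; case: (w i).
Qed.

Lemma linear_box C : Elinear C -> C = box (CRes C) (CTor C).
Proof.
move=> [h0 hD hS]; apply/setP => z; rewrite in_box.
apply/idP/andP => [hz|[/CResP[w hw hzw]]].
  split; first by apply/CResP; exists z.
  rewrite inE; suff -> : zeta_of (Nw z) = wadd z (wscale Ek z) by apply: hD => //; apply: hS.
  by apply/ffunP => i; rewrite !ffunE; case: (z i).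
rewrite inE => hN.
suff -> : z = wadd (wscale Ek w) (zeta_of (Nw z)) by apply: hD => //; apply: hS.
apply/ffunP => i; have := congr1 (fun f : bword n => f i) hzw; rewrite !ffunE.
by case: (z i); case: (w i).
Qed.

End L.

Import Pilot.Defs.
Theorem mainTheorem14 (n : nat) (C : {set word n}) :
  Elinear C ->
  (free C -> LSHull (perpSL C) = LSHull C) /\
  (CRes C :&: bperpS (CTor C) = [set bword0 n] ->
   CTor C = [set: bword n] ->
   RSHull (perpSR C) = RSHull C) /\
  SHull (perpS C) = SHull C.
Proof.
move=> hC; have cR := linear_closedR hC; have cT := linear_closedT hC.
have RT := linear_RT hC; have CE := linear_box hC.
split; [|split].
- move=> hf; rewrite CE -hf; exact: part1.
- move=> _ hT; rewrite CE hT; exact: part2.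
- rewrite CE; exact: part3.
Qed.
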